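(* If $k$ is even (and $k\ge2$), then $f(n,k)\ge\left(1-\frac{4}{k(k+2)}-o(1)\right)\binom{n}{3}$, where $o(1)\to0$ as $n\to\infty$ with $k$ fixed.
   Context: Let $K^{(2)}_n$ be the complete graph on $[n]$ with the natural order. A $k$-edge-labeling $\phi$ of $K^{(2)}_n$ assigns to each pair $uv$ a label from a fixed linearly ordered set of size $k$. A triple $u<v<w$ is good if $\phi(uv)<\phi(vw)$, and bad otherwise. $f(n,k)$ is the maximum, over all $k$-edge-labelings of $K^{(2)}_n$, of the number of good triples. *)

(* Defs.v *)
From HB Require Import structures.
From mathcomp Require Import all_boot all_order all_algebra.
Set Implicit Arguments. Unset Strict Implicit. Unset Printing Implicit Defensive.

(* A k-edge-labeling of K_n on vertex set 'I_n = {0,...,n-1} (natural order),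
   with labels in 'I_k (linearly ordered, size k).  The label of the pair
   {u,v} with u < v is phi (u, v); values of phi on pairs (u,v) with u >= v
   are irrelevant (never read). *)
Definition labeling (n k : nat) := {ffun 'I_n * 'I_n -> 'I_k}.

Definition good (n k : nat) (phi : labeling n k) (u v w : 'I_n) : bool :=
  [&& (u < v)%N, (v < w)%N & (phi (u, v) < phi (v, w))%N].

Definition good_count (n k : nat) (phi : labeling n k) : nat :=
  #|[set t : 'I_n * 'I_n * 'I_n | good phi t.1.1 t.1.2 t.2]|.

Definition f (n k : nat) : nat :=
  \max_(phi : labeling n k) good_count phi.

(* Main.v *)
Require Import Defs.
From HB Require Import structures.
From mathcomp Require Import all_boot all_order all_algebra.
From mathcomp Require Import zify ring lra.
Import Order.TTheory GRing.Theory Num.Theory.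
Set Implicit Arguments. Unset Strict Implicit. Unset Printing Implicit Defensive.


Lemma tri2 d : 2 * \sum_(0 <= t < d) t = d * d.-1.
Proof.
elim: d => [|d IH]; first by rewrite big_geq.
rewrite big_nat_recr //= mulnDr IH; case: d {IH} => [|d] /=; lia.
Qed.

Lemma cubsum d : 6 * \sum_(0 <= t < d.+1) t * (d - t) = d.-1 * d * d.+1.
Proof.
elim: d => [|d IH]; first by rewrite big_nat1.
rewrite big_nat_recr //= subnn muln0 addn0.
have -> : \sum_(0 <= t < d.+1) t * (d.+1 - t) =
          \sum_(0 <= t < d.+1) t * (d - t) + \sum_(0 <= t < d.+1) t.
  rewrite -big_split /=; apply: eq_big_nat => t /andP[_ Ht].
  rewrite subSn // mulnS; lia.
rewrite mulnDr IH.
have := tri2 d.+1; simpl => H.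
case: d IH H => [|d] IH H /=; nia.
Qed.

Lemma telesc (F E : nat -> nat) K :
  (forall c, c < K -> E c <= E c.+1) ->
  \sum_(E 0 <= v < E K) F v = \sum_(0 <= c < K) \sum_(E c <= v < E c.+1) F v.
Proof.
elim: K => [|K IH] H; first by rewrite big_geq // big_geq.
have mono : E 0 <= E K.
  elim: K {IH} H => [|K IHK] H //. apply: leq_trans (IHK _) (H K _) => //.
  by move=> c Hc; apply: H; apply: ltnW.
rewrite big_nat_recr //= -IH; last by move=> c Hc; apply: H; apply: ltnW.
by rewrite -big_cat_nat //; apply: H.
Qed.


Lemma lcount2 a B Z v :
  a * \sum_(0 <= u < v) (Z < a * u + B) <= a * v + B - Z.
Proof.
elim: v => [|v IH]; first by rewrite big_geq // muln0.
rewrite big_nat_recr //= mulnDr mulnS.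
move: IH; set S := a * _; set y := a * v.
case: (ltnP Z (y + B)) => h /=; rewrite ?muln1 ?muln0; lia.
Qed.

Lemma rcount2 b B Z s N :
  b * \sum_(s <= w < N) (B + b * w <= Z) <= minn (Z + b) (B + b * N) - (B + b * s).
Proof.
elim: N => [|N IH]; first by rewrite big_geq // muln0.
case: (leqP s N) => h; last first.
  by rewrite big_geq ?muln0.
rewrite big_nat_recr //= mulnDr mulnS.
move: IH; set S := b * _; set y := b * N.
have hy : b * s <= y by rewrite leq_mul2l h orbT.
case: (leqP (B + y) Z) => h2 /=; rewrite ?muln1 ?muln0; lia.
Qed.

Lemma setarg2 K (T : 'I_K -> nat -> nat -> bool) (E : 'I_K -> nat) u v w :
  (forall t, T t u v -> E t < v) -> (forall t, E t < v -> T t v w) ->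
  #|[set t | T t v w]| <= #|[set t | T t u v]| ->
  (forall t, E t < v -> T t u v) /\ (forall t, v <= E t -> ~~ T t v w).
Proof.
move=> h1 h2 hBA.
set A := [set t | T t u v] in hBA *.
set B := [set t | T t v w] in hBA *.
set C := [set t : 'I_K | E t < v].
have AC : A \subset C by apply/subsetP => i; rewrite !inE; apply: h1.
have CB : C \subset B by apply/subsetP => i; rewrite !inE; apply: h2.
have cAC := subset_leq_card AC; have cCB := subset_leq_card CB.
have eAC : #|A| = #|C| by apply/eqP; rewrite eqn_leq cAC; apply: leq_trans cCB hBA.
have eCB : #|C| = #|B| by apply/eqP; rewrite eqn_leq cCB; apply: leq_trans hBA _; rewrite eAC.
have /subset_cardP hAC := eAC; have /subset_cardP hCB := eCB.
move: (hAC AC) (hCB CB) => {}hAC {}hCB.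
split.
- by move=> i hi; have := hAC i; rewrite !inE hi.
- by move=> i hi; have := hCB i; rewrite !inE ltnNge hi /= => <-.
Qed.


Definition Ec m q c := if odd c then (c./2).+1 * m * q else c./2 * m.+1 * q.
Definition ca m c := if odd c then (c./2).+1 else m - c./2.
Definition cb m c := if odd c then m - c./2 else c./2.
Definition cg m c := if odd c then m.+1 else m.
Definition Tm m q c u v : bool := cg m c * Ec m q c < ca m c * u + cb m c * v.
Definition Km m := (m.*2).-1.
Definition labm m q u v := #|[set t : 'I_(Km m) | Tm m q t.+1 u v]|.
Definition Nm m q := m * m.+1 * q.
Definition badm m q v :=
  \sum_(0 <= u < v) \sum_(v.+1 <= w < Nm m q) (labm m q v w <= labm m q u v : nat).

Lemma cases_par c : exists h, c = h.*2 \/ c = (h.*2).+1.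
Proof.
exists c./2; have := odd_double_half c; case: (odd c) => /= H; [right|left]; lia.
Qed.

Lemma half_db h : (h.*2)./2 = h.
Proof. exact: doubleK. Qed.
Lemma half_db1 h : ((h.*2).+1)./2 = h.
Proof. by rewrite -[(h.*2).+1]/(true + h.*2) half_bit_double. Qed.

Lemma gsum m c : c <= m.*2 -> ca m c + cb m c = cg m c.
Proof.
have [h [->|->]] := cases_par c;
  rewrite /ca /cb /cg ?odd_double /= ?half_db ?half_db1 ?odd_double /=; lia.
Qed.

Lemma Ec0 m q : Ec m q 0 = 0.
Proof. by rewrite /Ec /= mul0n. Qed.
Lemma EcN m q : Ec m q m.*2 = Nm m q.
Proof. by rewrite /Ec odd_double half_db /Nm. Qed.

Lemma Ec_mono m q c : c < m.*2 -> Ec m q c <= Ec m q c.+1.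
Proof.
have [h [->|->]] := cases_par c; rewrite /Ec /= ?odd_double /= ?half_db ?half_db1.
- rewrite ltn_double uphalf_double => hc; nia.
- rewrite uphalf_double => _; nia.
Qed.

Lemma cg_pos m c : 0 < m -> 0 < cg m c.
Proof. by rewrite /cg; case: odd. Qed.

Lemma Tm_lt m q c u v : 0 < m -> c <= m.*2 -> u < v -> Tm m q c u v -> Ec m q c < v.
Proof.
rewrite /Tm => m0 hc huv; rewrite -(gsum hc) => H.
have hg := cg_pos c m0; rewrite -(gsum hc) in hg.
have : (ca m c + cb m c) * Ec m q c < (ca m c + cb m c) * v.
  apply: leq_trans H _; rewrite mulnDl leq_add2r leq_mul2l ltnW ?orbT //.
by rewrite ltn_pmul2l.
Qed.

Lemma Tm_gt m q c v w : 0 < m -> c <= m.*2 -> Ec m q c < v -> v <= w -> Tm m q c v w.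
Proof.
rewrite /Tm => m0 hc hEv hvw; rewrite -(gsum hc).
have hg := cg_pos c m0; rewrite -(gsum hc) in hg.
apply: leq_trans (_ : (ca m c + cb m c) * v <= _).
  by rewrite ltn_pmul2l.
by rewrite mulnDl leq_add2l leq_mul2l hvw orbT.
Qed.

Lemma Ec_le m q c d : c + d <= m.*2 -> Ec m q c <= Ec m q (c + d).
Proof.
elim: d => [|d IH] h; first by rewrite addn0.
rewrite addnS; apply: leq_trans (IH _) (Ec_mono _ _); lia.
Qed.


Definition al m c := if c == 0 then 1 else ca m c.
Definition ga m c := if c == 0 then 1 else cg m c.
Definition be m c := if c == (m.*2).-1 then 1 else cb m c.+1.
Definition de m c := if c == (m.*2).-1 then 1 else cg m c.+1.

Lemma perv_m m q c v : 0 < m -> c < m.*2 ->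
  Ec m q c < v -> v <= Ec m q c.+1 ->
  al m c * be m c * badm m q v <=
  ga m c * de m c * ((v - Ec m q c) * (Ec m q c.+1 - v)).
Proof.
move=> m0 hc hLv hvU.
have hvN : v <= Nm m q.
  rewrite -EcN; apply: leq_trans hvU _.
  have := @Ec_le m q c.+1 (m.*2 - c.+1); rewrite subnKC //; apply; lia.
set L := Ec m q c in hLv *; set U := Ec m q c.+1 in hvU *.
set Pl := fun u => (c == 0) || Tm m q c u v.
set Pr := fun w => (c == (m.*2).-1) || ~~ Tm m q c.+1 v w.
have step : badm m q v <= (\sum_(0 <= u < v) Pl u) * (\sum_(v.+1 <= w < Nm m q) Pr w).
  rewrite big_distrl /= /badm big_nat_cond [X in _ <= X]big_nat_cond.
  apply: leq_sum => u /andP[/andP[_ hu] _].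
  rewrite big_distrr /= big_nat_cond [X in _ <= X]big_nat_cond.
  apply: leq_sum => w /andP[/andP[hw1 hw2] _].
  case hlab: (labm m q v w <= labm m q u v); last by [].
  have hK : forall t : 'I_(Km m), t.+1 <= m.*2.
    by move=> t; have := ltn_ord t; rewrite /Km; lia.
  have [h1 h2] := @setarg2 (Km m) (fun t => Tm m q t.+1) (fun t => Ec m q t.+1) u v w
     (fun t => Tm_lt m0 (hK t) hu) (fun t h => Tm_gt m0 (hK t) h (ltnW hw1)) hlab.
  rewrite /Pl /Pr /=.
  have -> : (c == 0) || Tm m q c u v.
    case: eqP => //= /eqP c0.
    have ci : c.-1 < Km m by rewrite /Km; lia.
    have := h1 (Ordinal ci); rewrite /= prednK ?lt0n //; apply; exact: hLv.
  have -> : (c == (m.*2).-1) || ~~ Tm m q c.+1 v w.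
    case: eqP => //= /eqP cK.
    have ci : c < Km m by rewrite /Km; lia.
    by have := h2 (Ordinal ci); apply; exact: hvU.
  by [].
have hl : al m c * \sum_(0 <= u < v) Pl u <= ga m c * (v - L).
  rewrite /al /ga /Pl; have [c0|c0] := eqVneq c 0.
    by rewrite /= sum_nat_const_nat muln1 subn0 /L c0 Ec0 subn0 mul1n.
  rewrite /=.
  apply: leq_trans (lcount2 _ _ _ _) _.
  rewrite -(gsum (ltnW hc)) mulnBr mulnDl; lia.
have hr : be m c * \sum_(v.+1 <= w < Nm m q) Pr w <= de m c * (U - v).
  rewrite /be /de /Pr; have [cK|cK] := eqVneq c (m.*2).-1.
    rewrite /= sum_nat_const_nat muln1 mul1n /U.
    have -> : c.+1 = m.*2 by rewrite cK prednK // double_gt0.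
    rewrite EcN; lia.
  rewrite /=.
  under eq_bigr => w _ do rewrite -leqNgt.
  apply: leq_trans (rcount2 _ _ _ _ _) _.
  have hc1 : c.+1 <= m.*2 by [].
  rewrite -(gsum hc1) mulnBr mulnDl -/U; lia.
apply: leq_trans (_ : al m c * be m c *
   ((\sum_(0 <= u < v) Pl u) * (\sum_(v.+1 <= w < Nm m q) Pr w)) <= _).
  by rewrite leq_mul2l step orbT.
rewrite mulnACA; apply: leq_trans (leq_mul hl hr) _.
by rewrite mulnACA.
Qed.


Lemma cellpoly L U : L <= U ->
  6 * \sum_(L.+1 <= v < U.+1) (v - L) * (U - v) <= (U - L) ^ 3.
Proof.
move=> hLU.
rewrite -{1}(add0n L.+1) big_addn subSS.
have := cubsum (U - L); rewrite big_nat_recl // mul0n add0n.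
have -> : \sum_(0 <= i < U - L) i.+1 * (U - L - i.+1) =
          \sum_(0 <= i < U - L) (i + L.+1 - L) * (U - (i + L.+1)).
  apply: eq_big_nat => i /andP[_ hi]; congr (_ * _); lia.
move=> ->; set d := U - L; case: d => [|d] //=; nia.
Qed.

Lemma cell_m m q c : 0 < m -> c < m.*2 ->
  6 * (al m c * be m c) * \sum_(Ec m q c + 1 <= v < Ec m q c.+1 + 1) badm m q v <=
  ga m c * de m c * (Ec m q c.+1 - Ec m q c) ^ 3.
Proof.
move=> m0 hc.
have hLU := Ec_mono q hc.
rewrite -mulnA big_distrr /=.
apply: leq_trans (_ : 6 * \sum_(Ec m q c + 1 <= v < Ec m q c.+1 + 1)
   ga m c * de m c * ((v - Ec m q c) * (Ec m q c.+1 - v)) <= _).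
  rewrite leq_mul2l /=; rewrite big_nat_cond [X in _ <= X]big_nat_cond.
  apply: leq_sum => v /andP[/andP[h1 h2] _].
  apply: perv_m => //; lia.
rewrite -big_distrr /= mulnCA leq_mul2l; apply/orP; right.
rewrite !addn1; exact: cellpoly.
Qed.

Lemma cell_id m q c : 0 < m -> c < m.*2 ->
  ga m c * de m c * (Ec m q c.+1 - Ec m q c) ^ 3 =
  al m c * be m c * (m * m.+1 * q ^ 3 * ca m c).
Proof.
move=> m0; have [h [->|->]] := cases_par c.
- rewrite ltn_double => hm.
  rewrite /al /ga /be /de /Ec /ca /cb /cg /= !odd_double /= half_db uphalf_double.
  have -> : (h.*2 == (m.*2).-1) = false by apply/negbTE; apply/eqP; case: m m0 {hm} => // m _; rewrite doubleS /=; lia.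
  case: h hm => [|h] hm /=.
    rewrite !mul0n subn0; nia.
  have e : h.+2 * m * q - h.+1 * m.+1 * q = (m - h.+1) * q by nia.
  rewrite e; set x := m - h.+1; rewrite expnMn; ring.
- rewrite /al /ga /be /de /Ec /ca /cb /cg /= !odd_double /= ?half_db ?half_db1 ?uphalf_double.
  move=> hm.
  have e : h.+1 * m.+1 * q - h.+1 * m * q = h.+1 * q by nia.
  rewrite e expnMn.
  case: eqP => [e2|e2].
    have em : m = h.+1 by move: e2; case: m m0 {hm e} => // m _; rewrite doubleS /=; lia.
    rewrite em; ring.
  ring.
Qed.


Lemma albe_pos m c : 0 < m -> c < m.*2 -> 0 < al m c * be m c.
Proof.
move=> m0 hc; rewrite muln_gt0; apply/andP; split.
- rewrite /al; have [c0|c0] := eqVneq c 0; first by [].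
  have [h [e|e]] := cases_par c; subst c; rewrite /ca /= ?odd_double /= ?half_db ?half_db1 ?uphalf_double //.
  move: hc c0; rewrite ltn_double; case: h => // h; lia.
- rewrite /be; have [c0|c0] := eqVneq c (m.*2).-1; first by [].
  have [h [e|e]] := cases_par c; subst c; rewrite /cb /= ?odd_double /= ?half_db ?uphalf_double //.
  move: hc; rewrite ltn_double; lia.
Qed.

Lemma sum_ca m j : j <= m -> \sum_(0 <= c < j.*2) ca m c = j * m.+1.
Proof.
elim: j => [|j IH] hj; first by rewrite big_geq.
rewrite doubleS !big_nat_recr //= IH; last by lia.
rewrite /ca odd_double /= odd_double /= half_db uphalf_double; lia.
Qed.

Lemma bad_total m q : 0 < m ->
  6 * \sum_(0 <= v < Nm m q) badm m q v <= (m * m.+1) ^ 2 * q ^ 3.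
Proof.
move=> m0.
have step1 : \sum_(0 <= v < Nm m q) badm m q v <= \sum_(1 <= v < (Nm m q).+1) badm m q v.
  have h0 : \sum_(0 <= v < (Nm m q).+1) badm m q v = \sum_(1 <= v < (Nm m q).+1) badm m q v.
    by rewrite big_ltn // {1}/badm big_geq.
  by rewrite -h0 big_nat_recr //= leq_addr.
apply: leq_trans (_ : 6 * \sum_(1 <= v < (Nm m q).+1) badm m q v <= _).
  by rewrite leq_mul2l step1 orbT.
have ht := @telesc (badm m q) (fun c => Ec m q c + 1) (m.*2).
rewrite /= Ec0 EcN add0n in ht.
rewrite -[(Nm m q).+1]addn1 ht; last first.
  by move=> c hc; rewrite leq_add2r; apply: Ec_mono.
rewrite big_distrr /=.
apply: leq_trans (_ : \sum_(0 <= c < m.*2) m * m.+1 * q ^ 3 * ca m c <= _); last first.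
  rewrite -big_distrr /= sum_ca //; nia.
rewrite big_nat_cond [X in _ <= X]big_nat_cond.
apply: leq_sum => c /andP[/andP[_ hc] _].
have h1 := cell_m q m0 hc; rewrite cell_id // in h1.
have hp := albe_pos m0 hc.
rewrite mulnAC in h1.
by rewrite -(leq_pmul2r hp) [X in _ <= X]mulnC.
Qed.


Lemma sub_range (F : nat -> nat) a b c d : c <= a -> b <= d ->
  \sum_(a <= i < b) F i <= \sum_(c <= i < d) F i.
Proof.
move=> hca hbd.
case: (leqP a b) => hab; last by rewrite big_geq // ltnW.
rewrite (@big_cat_nat _ _ _ a c d) //; last by apply: leq_trans hab hbd.
rewrite (@big_cat_nat _ _ _ b a d) //.
by apply: leq_trans (leq_addr _ _) (leq_addl _ _).
Qed.

Lemma card_to_sum n k (phi : labeling n k) (lab : nat -> nat -> nat) :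
  (forall x y : 'I_n, nat_of_ord (phi (x, y)) = lab x y) ->
  good_count phi = \sum_(0 <= u < n) \sum_(0 <= v < n) \sum_(0 <= w < n)
     [&& u < v, v < w & lab u v < lab v w] :> nat.
Proof.
move=> hphi.
rewrite /good_count -sum1_card big_mkcond /=.
set G := fun t : 'I_n * 'I_n * 'I_n => if t \in [set t | good phi t.1.1 t.1.2 t.2] then 1 else 0.
have e1 : \sum_t G t = \sum_(p : 'I_n * 'I_n) \sum_(w : 'I_n) G (p, w).
  by rewrite pair_bigA; apply: eq_bigr => -[p w].
have e2 : forall H : 'I_n * 'I_n -> nat, \sum_p H p = \sum_(u : 'I_n) \sum_(v : 'I_n) H (u, v).
  by move=> H; rewrite pair_bigA; apply: eq_bigr => -[p w].
rewrite e1 e2 /G /=.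
set H := fun u v w : nat => [&& u < v, v < w & lab u v < lab v w] : nat.
have e3 : forall u v w : 'I_n,
  (if (u, v, w) \in [set t | good phi t.1.1 t.1.2 t.2] then 1 else 0) = H u v w.
  by move=> u v w; rewrite inE /good /= !hphi /H; case: (_ && _).
under eq_bigr => u _ do under eq_bigr => v _ do under eq_bigr => w _ do rewrite e3.
rewrite -(big_mkord xpredT (fun u => \sum_(v < n) \sum_(w < n) H u v w)).
apply: eq_bigr => u _.
rewrite -(big_mkord xpredT (fun v => \sum_(w < n) H u v w)).
apply: eq_bigr => v _.
by rewrite -(big_mkord xpredT (fun w => H u v w)).
Qed.

Lemma restrict (lab : nat -> nat -> nat) n N : N <= n ->
  \sum_(0 <= v < N) \sum_(0 <= u < v) \sum_(v.+1 <= w < N) (lab u v < lab v w : nat) <=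
  \sum_(0 <= u < n) \sum_(0 <= v < n) \sum_(0 <= w < n) ([&& u < v, v < w & lab u v < lab v w] : nat).
Proof.
move=> hN.
rewrite exchange_big_nat.
apply: leq_trans (sub_range _ (leq0n 0) hN).
rewrite big_nat_cond [X in _ <= X]big_nat_cond.
apply: leq_sum => v /andP[/andP[_ hv] _].
apply: leq_trans (_ : _ <= \sum_(0 <= u < v) \sum_(0 <= w < n)
    ([&& u < v, v < w & lab u v < lab v w] : nat)) _; last first.
  by apply: sub_range => //; apply: leq_trans (ltnW hv) hN.
rewrite big_nat_cond [X in _ <= X]big_nat_cond.
apply: leq_sum => u /andP[/andP[_ hu] _].
apply: leq_trans (_ : _ <= \sum_(v.+1 <= w < N)
    ([&& u < v, v < w & lab u v < lab v w] : nat)) _; last first.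
  by apply: sub_range.
rewrite big_nat_cond [X in _ <= X]big_nat_cond.
apply: leq_sum => w /andP[/andP[hw _] _].
by rewrite hu hw.
Qed.

Lemma C3_sum N : \sum_(0 <= v < N) v * (N - v.+1) = 'C(N, 3).
Proof.
apply/eqP; rewrite -(eqn_pmul2l (_ : 0 < 6)) //; apply/eqP.
have hb := bin_ffact N 3.
rewrite (_ : 3`! = 6) // in hb.
rewrite [6 * 'C(N, 3)]mulnC hb !ffactnS ffactn0 muln1.
case: N {hb} => [|d]; first by rewrite big_geq.
under eq_bigr => v _ do rewrite subSS.
rewrite cubsum /=; case: d => [|d] /=; lia.
Qed.

Lemma good_bad (lab : nat -> nat -> nat) N :
  \sum_(0 <= v < N) \sum_(0 <= u < v) \sum_(v.+1 <= w < N) (lab u v < lab v w : nat) +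
  \sum_(0 <= v < N) \sum_(0 <= u < v) \sum_(v.+1 <= w < N) (lab v w <= lab u v : nat) = 'C(N, 3).
Proof.
rewrite -C3_sum -big_split; apply: eq_bigr => v _.
rewrite -big_split /=.
rewrite (eq_bigr (fun _ => N - v.+1)); first by rewrite sum_nat_const_nat subn0 mulnC.
move=> u _; rewrite -big_split /=.
rewrite (eq_bigr (fun _ => 1)); first by rewrite sum_nat_const_nat muln1.
by move=> w _; case: leqP.
Qed.


Lemma labm_lt m q u v : 0 < m -> labm m q u v < m.*2.
Proof.
move=> m0; rewrite /labm; apply: leq_ltn_trans (max_card _) _.
by rewrite card_ord /Km; lia.
Qed.

Lemma f_lower m q n : 0 < m -> Nm m q <= n ->
  6 * 'C(Nm m q, 3) <= 6 * f n (m.*2) + (m * m.+1) ^ 2 * q ^ 3.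
Proof.
move=> m0 hN.
pose phi : labeling n (m.*2) := [ffun p : 'I_n * 'I_n => Ordinal (@labm_lt m q p.1 p.2 m0)].
have hphi : forall x y : 'I_n, nat_of_ord (phi (x, y)) = labm m q x y.
  by move=> x y; rewrite ffunE.
have h1 := card_to_sum hphi.
have h2 := restrict (labm m q) hN.
have h3 : good_count phi <= f n (m.*2).
  by rewrite /f; apply: (@leq_bigmax _ (fun phi => good_count phi)).
have h4 := good_bad (labm m q) (Nm m q).
have h5 := bad_total q m0.
rewrite /badm in h5.
rewrite -h4 mulnDr.
apply: leq_add; last exact: h5.
rewrite leq_mul2l /=; apply: leq_trans h3; rewrite h1; exact: h2.
Qed.

Local Open Scope ring_scope.

Lemma cube_le (u v : rat) : 0 <= u -> u <= v -> u ^+ 3 <= v ^+ 3.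
Proof.
move=> hu huv.
have h : 0 <= (v - u) * (v ^+ 2 + u * v + u ^+ 2).
  apply: mulr_ge0; first lra.
  have : 0 <= u * v by apply: mulr_ge0; lra.
  have := sqr_ge0 u; have := sqr_ge0 v; lra.
have e : v ^+ 3 - u ^+ 3 = (v - u) * (v ^+ 2 + u * v + u ^+ 2) by ring.
lra.
Qed.

Lemma main_m m : (0 < m)%N -> forall eps : rat, 0 < eps ->
  exists N : nat, forall n : nat, (N <= n)%N ->
    (1 - 4 / (m.*2 * (m.*2 + 2))%:R - eps) * ('C(n, 3))%:R <= (f n m.*2)%:R.
Proof.
move=> m0 eps heps.
set D := (m * m.+1)%N.
have D0 : (0 < D)%N by rewrite /D muln_gt0 m0.
set a := (D + 2)%N.
exists (a + Num.Def.archi_bound (3 * a%:R / eps))%N => n hn.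
set q := (n %/ D)%N.
have hNe : Nm m q = (q * D)%N by rewrite /Nm /D mulnC.
have hN : (Nm m q <= n)%N by rewrite hNe leq_divM.
have hN2 : (n < Nm m q + D)%N.
  by rewrite hNe addnC -mulSn ltn_ceil.
have key := f_lower m0 hN.
set N := Nm m q in hN hN2 key hNe.
have hNa : (2 <= N)%N by move: hn hN2; rewrite /a; lia.
have c3N : ((N - 2) ^ 3 <= 6 * 'C(N, 3))%N.
  have hb := bin_ffact N 3; rewrite (_ : 3`! = 6)%N // in hb.
  rewrite mulnC hb !ffactnS ffactn0 muln1.
  case: N hNa {key hN hN2 hNe hb} => [|[|d]] //= _.
  have -> : (d.+2 - 2 = d)%N by lia. nia.
have c3n : (6 * 'C(n, 3) <= n ^ 3)%N.
  have hb := bin_ffact n 3; rewrite (_ : 3`! = 6)%N // in hb.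
  rewrite mulnC hb !ffactnS ffactn0 muln1 expnS expnS expn1.
  by apply: leq_mul => //; apply: leq_mul; rewrite ?leq_pred // -subn2 leq_subr.
have hD3 : ((m * m.+1) ^ 2 * q ^ 3 * D = N ^ 3)%N.
  by rewrite hNe /D; ring.
have hb : 3 * a%:R / eps < (Num.Def.archi_bound (3 * a%:R / eps))%:R.
  apply: archi_boundP; apply: divr_ge0 => //; [apply: mulr_ge0 => //| exact: ltW].
have hkD : (m.*2 * (m.*2 + 2))%:R = 4 * D%:R :> rat.
  by rewrite -natrM; congr (_%:R); rewrite /D -!mul2n; lia.
rewrite hkD.
set nn := n%:R : rat. set NN := N%:R : rat. set ff := (f n m.*2)%:R : rat.
set c3 := ('C(n, 3))%:R : rat. set cN := ('C(N, 3))%:R : rat.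
set DD := D%:R : rat. set X := ((m * m.+1) ^ 2 * q ^ 3)%:R : rat.
have DDp : 0 < DD by rewrite ltr0n.
have F1 : 6 * cN <= 6 * ff + X.
  by rewrite /cN /ff /X -[6]/(6%:R) -!natrM -natrD ler_nat.
have F2 : (NN - 2) ^+ 3 <= 6 * cN.
  by rewrite /NN /cN -[6]/(6%:R) -natrM -[2]/(2%:R) -natrB // -natrX ler_nat.
have F3 : 6 * c3 <= nn ^+ 3.
  by rewrite /nn /c3 -[6]/(6%:R) -natrM -natrX ler_nat.
have F4 : X * DD <= nn ^+ 3.
  rewrite /X /DD -natrM hD3 -natrX ler_nat leq_exp2r //.
have F5 : nn - a%:R <= NN - 2.
  have : (n + 2 <= N + a)%N by rewrite /a; lia.
  rewrite -(ler_nat rat) !natrD -/nn -/NN; lra.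
have F6 : a%:R <= nn.
  by rewrite ler_nat; apply: leq_trans hn; apply: leq_addr.
have F7 : 3 * a%:R < eps * nn.
  have : (Num.Def.archi_bound (3 * a%:R / eps))%:R <= nn.
    by rewrite ler_nat; apply: leq_trans hn; apply: leq_addl.
  move=> h; have h' := lt_le_trans hb h.
  by move: h'; rewrite ltr_pdivrMr // [nn * _]mulrC.
have c3ge : 0 <= c3 by apply: ler0n.
have ffge : 0 <= ff by apply: ler0n.
have nnge : 0 <= nn by apply: ler0n.
have age : 0 <= a%:R :> rat by apply: ler0n.
have e4 : 4 / (4 * DD) = DD^-1.
  by field; rewrite pnatr_eq0 -lt0n.
rewrite e4.
set x := 1 - DD^-1 - eps.
case: (lerP x 0) => hx.
  apply: le_trans (_ : 0 <= ff) => //.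
  by apply: mulr_le0_ge0.
have G1 : x * (6 * c3) <= x * nn ^+ 3 by rewrite ler_pM2l.
have G2 : X <= nn ^+ 3 / DD by rewrite ler_pdivlMr.
have G3 : (nn - a%:R) ^+ 3 <= (NN - 2) ^+ 3 by apply: cube_le; lra.
have G4 : nn ^+ 3 - 3 * a%:R * nn ^+ 2 <= (nn - a%:R) ^+ 3.
  have : 0 <= a%:R ^+ 2 * (3 * nn - a%:R) by apply: mulr_ge0; [apply: sqr_ge0|lra].
  have e : (nn - a%:R) ^+ 3 - (nn ^+ 3 - 3 * a%:R * nn ^+ 2) = a%:R ^+ 2 * (3 * nn - a%:R) by ring.
  lra.
have G5 : 3 * a%:R * nn ^+ 2 <= eps * nn ^+ 3.
  have : 0 <= nn ^+ 2 by apply: sqr_ge0.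
  move=> h; have := ler_wpM2r h (ltW F7).
  have e : eps * nn * nn ^+ 2 = eps * nn ^+ 3 by ring. by rewrite e.
have G6 : nn ^+ 3 / DD = DD^-1 * nn ^+ 3 by rewrite mulrC.
have G7 : x * nn ^+ 3 <= 6 * ff.
  rewrite /x.
  have : (1 - DD^-1 - eps) * nn ^+ 3 = nn ^+ 3 - DD^-1 * nn ^+ 3 - eps * nn ^+ 3 by ring.
  lra.
have : x * (6 * c3) <= 6 * ff by lra.
have e6 : x * (6 * c3) = 6 * (x * c3) by ring.
rewrite e6; lra.
Qed.


Unset Implicit Arguments.

Theorem lemma4p5 (k : nat) :
  (2 <= k)%N -> ~~ odd k ->
  forall eps : rat, 0 < eps ->
  exists N : nat, forall n : nat, (N <= n)%N ->
    (1 - 4 / (k * (k + 2))%:R - eps) * ('C(n, 3))%:R <= (f n k)%:R.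
Proof.
move=> hk hodd eps heps.
have hk2 : k = (k./2).*2.
  by have := odd_double_half k; rewrite (negbTE hodd) add0n.
have m0 : (0 < k./2)%N.
  by move: hk; rewrite {1}hk2; case: (k./2).
rewrite hk2.
exact: main_m m0 eps heps.
Qed.
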